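(* Let $\mathbb{E}$ be a finite-dimensional Euclidean space, $\mathcal{K}\subseteq\mathbb{E}$ a closed convex cone, $\mathcal{A}:\mathbb{E}\to\mathbb{R}^m$ a surjective linear map and $b\in\mathbb{R}^m$, and let $\mathcal{F}=\{x\in\mathcal{K}:\mathcal{A}x=b\}\neq\emptyset$. Suppose strict feasibility fails for $\mathcal{F}$. Let $\{y^i\}_{i=1}^k$ be the vectors obtained by a facial reduction process applied to $\mathcal{F}$, let $\bar{\mathcal{K}}=\mathcal{K}\cap\bigcap_{i=1}^k(\mathcal{A}^*y^i)^\perp$ and $\bar{\mathbb{E}}=\operatorname{span}(\bar{\mathcal{K}})$. Then the restriction $\bar{\mathcal{A}}:\bar{\mathbb{E}}\to\mathbb{R}^m$ of $\mathcal{A}$ to $\bar{\mathbb{E}}$ is not surjective. In other words, the equality constraint system in $\{x\in\bar{\mathcal{K}}:\mathcal{A}x=b\}$ contains redundant constraints.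
   Context: Strict feasibility of $\{x\in C:\mathcal{A}x=b\}$ with respect to a closed convex cone $C$ means that this set contains a point of $\operatorname{relint}(C)$. For a cone $C$, $C^*=\{z:\langle z,x\rangle\ge0\ \forall x\in C\}$ is the dual cone and $C^\perp$ its orthogonal complement; $v^\perp=\{v\}^\perp$. Facial reduction process: set $\mathcal{K}^0=\mathcal{K}$, $\mathcal{F}^0=\mathcal{F}$, $k=0$; while strict feasibility fails for $\mathcal{F}^k=\{x\in\mathcal{K}^k:\mathcal{A}x=b\}$ with respect to $\mathcal{K}^k$, increase $k$ by one, choose $y^k\in\mathbb{R}^m$ with $\mathcal{A}^*y^k\in(\mathcal{K}^{k-1})^*\setminus(\mathcal{K}^{k-1})^\perp$ and $\langle b,y^k\rangle=0$, and set $\mathcal{K}^k=\mathcal{K}^{k-1}\cap(\mathcal{A}^*y^k)^\perp$. (Such $y^k$ exists whenever strict feasibility fails.) The process returns the vectors $y^1,\dots,y^k$ at termination. *)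

(* Defs.v *)
From HB Require Import structures.
From mathcomp Require Import all_boot all_order all_algebra.
From mathcomp Require Import all_classical all_reals all_analysis.
Set Implicit Arguments. Unset Strict Implicit. Unset Printing Implicit Defensive.
Import Order.TTheory GRing.Theory Num.Theory.
Import numFieldNormedType.Exports.
Local Open Scope classical_set_scope.
Local Open Scope ring_scope.

(* Euclidean space E = R^n realised as row vectors 'rV[R]_n with the
   standard inner product; a linear map A : E -> R^m is the matrix
   A : 'M_(n,m) acting by x |-> x *m A; its adjoint is y |-> y *m A^T. *)

Section FR.
Variables (R : realType) (n m : nat).

Definition inner (k : nat) (z x : 'rV[R]_k) : R := \sum_(i < k) z 0 i * x 0 i.

Definition linmap (A : 'M[R]_(n, m)) (x : 'rV[R]_n) : 'rV[R]_m := x *m A.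
Definition adjoint (A : 'M[R]_(n, m)) (y : 'rV[R]_m) : 'rV[R]_n := y *m A^T.

Definition is_convex (C : set 'rV[R]_n) : Prop :=
  forall x y t, C x -> C y -> 0 <= t <= 1 -> C (t *: x + (1 - t) *: y).

Definition is_cone (C : set 'rV[R]_n) : Prop :=
  forall x t, C x -> 0 <= t -> C (t *: x).

Definition is_closed_convex_cone (C : set 'rV[R]_n) : Prop :=
  [/\ closed C, is_convex C & is_cone C].

Definition lin_span (S : set 'rV[R]_n) : set 'rV[R]_n :=
  [set x | exists s : seq (R * 'rV[R]_n),
     (forall p, p \in s -> S p.2) /\ x = \sum_(p <- s) p.1 *: p.2].

Definition aff (S : set 'rV[R]_n) : set 'rV[R]_n :=
  [set x | exists s : seq (R * 'rV[R]_n),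
     [/\ (forall p, p \in s -> S p.2), \sum_(p <- s) p.1 = 1
       & x = \sum_(p <- s) p.1 *: p.2]].

Definition relint (C : set 'rV[R]_n) : set 'rV[R]_n :=
  [set x | C x /\ exists2 e : R, 0 < e & ball x e `&` aff C `<=` C].

Definition dual_cone (C : set 'rV[R]_n) : set 'rV[R]_n :=
  [set z | forall x, C x -> 0 <= inner z x].

Definition orth (C : set 'rV[R]_n) : set 'rV[R]_n :=
  [set z | forall x, C x -> inner z x = 0].

Definition strictly_feasible (C : set 'rV[R]_n) (A : 'M[R]_(n, m))
  (b : 'rV[R]_m) : Prop :=
  exists x, relint C x /\ linmap A x = b.

Definition reduced_cone (K : set 'rV[R]_n) (A : 'M[R]_(n, m))
  (ys : seq 'rV[R]_m) : set 'rV[R]_n :=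
  [set x | K x /\ forall y, y \in ys -> inner (adjoint A y) x = 0].

(* ys = [:: y^1; ...; y^k] is the output of a (terminated) facial
   reduction process applied to {x in K : A x = b}: at each step i the
   current problem is not strictly feasible and y^i is a valid reducing
   certificate; at termination the final problem is strictly feasible. *)
Definition facial_reduction_output (K : set 'rV[R]_n) (A : 'M[R]_(n, m))
  (b : 'rV[R]_m) (ys : seq 'rV[R]_m) : Prop :=
  (forall i, (i < size ys)%N ->
     let Kprev := reduced_cone K A (take i ys) in
     let yi := nth 0 ys i in
     [/\ ~ strictly_feasible Kprev A b,
         dual_cone Kprev (adjoint A yi),
         ~ orth Kprev (adjoint A yi)
       & inner b yi = 0])
  /\ strictly_feasible (reduced_cone K A ys) A b.

End FR.

(* Main.v *)
Require Import Defs.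
From HB Require Import structures.
From mathcomp Require Import all_boot all_order all_algebra.
From mathcomp Require Import all_classical all_reals all_analysis.
Import Order.TTheory GRing.Theory Num.Theory.
Local Open Scope classical_set_scope.
Local Open Scope ring_scope.

Lemma inner_mx (R : realType) k (z x : 'rV[R]_k) : inner z x = (z *m x^T) 0 0.
Proof. rewrite /inner !mxE; apply: eq_bigr => i _; by rewrite mxE. Qed.

Lemma inner_adj (R : realType) n m (A : 'M[R]_(n, m)) y x :
  inner (adjoint A y) x = inner y (linmap A x).
Proof. by rewrite !inner_mx /adjoint /linmap trmx_mul mulmxA. Qed.

Lemma inner_span (R : realType) n (S : set 'rV[R]_n) w x :
  (forall v, S v -> inner w v = 0) -> lin_span S x -> inner w x = 0.
Proof.
move=> H [s [Hs ->]]; elim: s Hs => [|p s IH] Hs.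
  by rewrite big_nil /inner big1 // => i _; rewrite mxE mulr0.
have Hp : inner w p.2 = 0 by apply: H; apply: Hs; rewrite inE eqxx.
have Hr : inner w (\sum_(q <- s) q.1 *: q.2) = 0.
  by apply: IH => q qs; apply: Hs; rewrite inE qs orbT.
move: Hp Hr; rewrite big_cons /inner => Hp Hr.
rewrite (eq_bigr (fun i => p.1 * (w 0 i * p.2 0 i) + w 0 i * (\sum_(q <- s) q.1 *: q.2) 0 i)); last first.
  by move=> i _; rewrite !mxE mulrDr mulrCA.
by rewrite big_split /= -mulr_sumr Hp mulr0 Hr addr0.
Qed.

Lemma inner_self0 (R : realType) k (y : 'rV[R]_k) : inner y y = 0 -> y = 0.
Proof.
rewrite /inner => H.
have H2 := (@psumr_eq0P R _ xpredT (fun i => y 0 i * y 0 i) (fun i _ => sqr_ge0 (y 0 i)) H).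
apply/matrixP => i j; rewrite (ord1 i) mxE.
have := H2 j isT; by move/eqP; rewrite mulf_eq0 orbb => /eqP.
Qed.

Theorem theorem3p5 (R : realType) (n m : nat) (K : set 'rV[R]_n)
  (A : 'M[R]_(n, m)) (b : 'rV[R]_m) (ys : seq 'rV[R]_m) :
  is_closed_convex_cone K ->
  (forall c : 'rV[R]_m, exists x, linmap A x = c) ->
  (exists x, K x /\ linmap A x = b) ->
  ~ strictly_feasible K A b ->
  facial_reduction_output K A b ys ->
  ~ (forall c : 'rV[R]_m,
       exists x, lin_span (reduced_cone K A ys) x /\ linmap A x = c).
Proof.
move=> _ _ _ nsf [Hstep Hfin] Hsurj.
case: ys Hstep Hfin Hsurj => [|y1 ys] Hstep Hfin Hsurj.
  apply: nsf.
  have -> : K = reduced_cone K A [::] by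
    rewrite /reduced_cone; apply/funext => x; apply/propext; split => [Kx|[]//]; split.
  exact: Hfin.
have [_ _ Hno _] := Hstep 0%N isT.
have [x [Hx Hxc]] := Hsurj y1.
have : inner (adjoint A y1) x = 0.
  apply: (@inner_span _ _ _ _ _ _ Hx) => v [_ Hv]; apply: Hv; by rewrite inE eqxx.
rewrite inner_adj Hxc => /inner_self0 Hy; apply: Hno => v _.
by rewrite /= Hy /adjoint mul0mx /inner big1 // => i _; rewrite mxE mul0r.
Qed.
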